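(* Let $n\ge3$ and let $x\in B$ with $|x|=2n+9$ and $\delta(x)\ge5$. Then $[x]_2\notin R$.
   Context: Stern's sequence $(a(n))_{n\ge0}$: $a(0)=0$, $a(1)=1$, $a(2n)=a(n)$, $a(2n+1)=a(n)+a(n+1)$; $s(n)=a(n+1)$. $R$ is the set of record-setters of $s$, i.e. indices $v\ge0$ with $s(i)<s(v)$ for all $i<v$. For a binary string $x$, $[x]_2$ is the integer it represents in base 2 and $|x|$ its length. $B$ denotes the set of nonempty binary strings that are concatenations of blocks each equal to $10$ or $100$; for $x\in B$, $\delta(x)$ is the number of $0$s minus the number of $1$s in $x$, which equals the number of $100$ blocks. *)

(* Defs.v *)
From mathcomp Require Import all_boot.
Set Implicit Arguments. Unset Strict Implicit. Unset Printing Implicit Defensive.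

(* Stern's diatomic sequence a(n): a(0)=0, a(1)=1, a(2n)=a(n), a(2n+1)=a(n)+a(n+1).
   Defined with a fuel argument; [stern n] uses fuel n.+1, which suffices since
   all recursive calls are on strictly smaller arguments (for n >= 2). *)
Fixpoint stern_fuel (fuel n : nat) : nat :=
  match fuel with
  | 0 => 0
  | fuel'.+1 =>
    match n with
    | 0 => 0
    | 1 => 1
    | _ => if odd n then stern_fuel fuel' n./2 + stern_fuel fuel' n./2.+1
           else stern_fuel fuel' n./2
    end
  end.

Definition stern (n : nat) : nat := stern_fuel n.+1 n.

Definition s (n : nat) : nat := stern n.+1.

Definition record_setter (v : nat) : Prop := forall i, i < v -> s i < s v.

(* binary strings: seq bool, most significant bit first; [x]_2 *)
Definition bin_val (x : seq bool) : nat := foldl (fun (acc : nat) (b : bool) => acc.*2 + nat_of_bool b) 0 x.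

Inductive inB : seq bool -> Prop :=
  | inB_10 : inB [:: true; false]
  | inB_100 : inB [:: true; false; false]
  | inB_10c y : inB y -> inB ([:: true; false] ++ y)
  | inB_100c y : inB y -> inB ([:: true; false; false] ++ y).

(* delta(x) = #0s - #1s (as an integer-valued quantity; on B it is >= 0) *)
Definition delta (x : seq bool) : nat := count (fun b : bool => ~~ b) x - count (fun b : bool => b) x.

Example stern_small : [seq stern i | i <- iota 0 10] = [:: 0;1;1;2;1;3;2;3;1;4]. Proof. by []. Qed.
Example binval_ex : bin_val [:: true; false; false; true; false] = 18. Proof. by []. Qed.

(* Main.v *)
Require Import Defs.
From mathcomp Require Import all_boot zify.

Lemma stern_fuel_eq f g n : n < f -> n < g -> stern_fuel f n = stern_fuel g n.
Proof.
elim: f g n => [|f IH] [|g] n //.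
case: n => [|[|n]] // Hf Hg.
rewrite [LHS]/= [RHS]/= negbK.
case: ifP => Ho.
  have Hm : n %% 2 = 1 by rewrite modn2 Ho.
  rewrite (IH g) ?(IH g (n./2.+2)) //; rewrite -?divn2; lia.
rewrite (IH g) //; rewrite -?divn2; lia.
Qed.

Lemma stern_fuelE f n : n < f -> stern_fuel f n = stern n.
Proof. by move=> H; apply: stern_fuel_eq. Qed.

Lemma sf_unfold f n : stern_fuel f.+1 n.+2 =
  if odd n.+2 then stern_fuel f (n.+2)./2 + stern_fuel f (n.+2)./2.+1
  else stern_fuel f (n.+2)./2.
Proof. by []. Qed.

Lemma stern_SS n : stern n.+2 =
  if odd n.+2 then stern (n.+2)./2 + stern (n.+2)./2.+1 else stern (n.+2)./2.
Proof.
rewrite {1}/stern sf_unfold.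
have Hd : (n.+2)./2 = n./2.+1 by [].
case: ifP => Ho; rewrite Hd !stern_fuelE //; rewrite -?divn2; try lia.
Qed.

Lemma stern_double m : stern m.*2 = stern m.
Proof.
case: m => [|m] //.
rewrite doubleS stern_SS.
have -> : odd m.*2.+2 = false by rewrite /= odd_double.
by have -> : (m.*2.+2)./2 = m.+1 by rewrite -doubleS doubleK.
Qed.

Lemma stern_odd m : stern m.*2.+1 = stern m + stern m.+1.
Proof.
case: m => [|m] //.
rewrite doubleS stern_SS.
have -> : odd m.*2.+3 = true by rewrite /= odd_double.
by have -> : (m.*2.+3)./2 = m.+1 by rewrite -doubleS /= uphalf_double.
Qed.

Definition step (v : nat * nat) (b : bool) : nat * nat :=
  if b then (v.1 + v.2, v.2) else (v.1, v.1 + v.2).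

Lemma bv_acc l acc :
  foldl (fun (acc : nat) (b : bool) => acc.*2 + nat_of_bool b) acc l
  = acc * 2 ^ size l + bin_val l.
Proof.
elim: l acc => [|b l IH] acc /=; first by rewrite muln1 addn0.
rewrite /bin_val /= !IH expnS -!addnn; lia.
Qed.

Lemma bin_val_cat l1 l2 : bin_val (l1 ++ l2) = bin_val l1 * 2 ^ size l2 + bin_val l2.
Proof. by rewrite {1}/bin_val foldl_cat bv_acc. Qed.

Lemma bin_val_lt l : bin_val l < 2 ^ size l.
Proof.
elim: l => [|b l IH] //.
have -> : bin_val (b :: l) = bin_val [:: b] * 2 ^ size l + bin_val l by rewrite -bin_val_cat.
have : bin_val [:: b] <= 1 by case: b.
rewrite /= expnS; move: IH; set P := 2 ^ size l; move=> h1 h2.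
have : bin_val [:: b] * P <= P by rewrite -{2}(mul1n P) leq_mul2r h2 orbT.
lia.
Qed.

Lemma vec_correct x :
  foldl step (0, 1) x = (stern (bin_val x), stern (bin_val x).+1).
Proof.
elim/last_ind: x => [|x b IH] //.
rewrite foldl_rcons IH -cats1 bin_val_cat /= muln2.
set m := bin_val x.
case: b.
  have -> : bin_val [:: true] = 1 by [].
  rewrite addn1 /step /= stern_odd; congr (_, _).
  by rewrite -doubleS stern_double.
have -> : bin_val [:: false] = 0 by [].
by rewrite addn0 /step /= stern_double stern_odd.
Qed.

Definition blk (b : bool) : seq bool :=
  if b then [:: true; false; false] else [:: true; false].

Definition word (bs : seq bool) := flatten (map blk bs).

Lemma word_cons b bs : word (b :: bs) = blk b ++ word bs.
Proof. by []. Qed.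

Lemma inB_word x : inB x -> exists b bs, x = word (b :: bs).
Proof.
elim => [|| y _ [b [bs ->]] | y _ [b [bs ->]]].
- by exists false, [::].
- by exists true, [::].
- by exists false, (b :: bs).
- by exists true, (b :: bs).
Qed.

Lemma size_word bs : size (word bs) = 2 * size bs + count id bs.
Proof. elim: bs => [|b bs IH] //; rewrite word_cons size_cat IH; case: b => /=; lia. Qed.

Lemma delta_word bs : delta (word bs) = count id bs.
Proof.
rewrite /delta.
have -> : count (fun b : bool => ~~ b) (word bs) = size bs + count id bs.
  by elim: bs => [|b bs IH] //; rewrite word_cons count_cat IH; case: b => /=; lia.
have -> : count (fun b : bool => b) (word bs) = size bs.
  by elim: bs => [|b bs IH] //; rewrite word_cons count_cat IH; case: b => /=; lia.
lia.
Qed.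

Fixpoint fib (n : nat) : nat :=
  match n with 0 => 0 | 1 => 1 | (m.+1 as k).+1 => fib m + fib k end.

Lemma fibSS n : fib n.+2 = fib n + fib n.+1.
Proof. by []. Qed.

Arguments fib : simpl never.

Lemma fib_mono n : fib n <= fib n.+1.
Proof. by case: n => [|n] //; rewrite fibSS leq_addl. Qed.

Definition Phi R (v : nat * nat) := fib R * v.1 + fib R.+1 * v.2.

Lemma key_ineq k : 3 <= k -> 13 * fib k.+1 <= 22 * fib k.
Proof.
case: k => [|[|[|k]]] // _.
have h := fib_mono k.
rewrite !fibSS in h *.
lia.
Qed.

Lemma main_bound bs p q : 3 * p <= 2 * q ->
  10 ^ (count id bs - 1) * (foldl step (p, q) (word bs)).2
  <= 9 ^ (count id bs - 1) * Phi (size (word bs)) (p, q).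
Proof.
elim: bs p q => [|b bs IH] p q Hc.
  by rewrite /= /Phi /= !mul1n.
rewrite word_cons foldl_cat size_cat.
case: b => /=; rewrite ?add1n ?add0n.
-
  change (3 + size (word bs)) with (size (word bs)).+3.
  have Hc' : 3 * (p + q) <= 2 * (p + q + (p + q + q)) by lia.
  move: (IH _ _ Hc').
  set R := size (word bs).
  set v := foldl step _ _.
  have HPhi : Phi R.+3 (p, q) = Phi R (p + q, p + q + (p + q + q)) + fib R * q.
    by rewrite /Phi /= !fibSS; nia.
  case: (posnP (count id bs)) => Hcnt.
    rewrite Hcnt /= !mul1n => H; rewrite HPhi; lia.
  have HR : 3 <= R.
    by rewrite /R size_word; move: (count_size id bs); lia.
  have -> : (count id bs).+1 - 1 = (count id bs - 1).+1 by lia.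
  set e := count id bs - 1.
  move=> H.
  rewrite !expnS.
  have K : 10 * Phi R (p + q, p + q + (p + q + q)) <= 9 * Phi R.+3 (p, q).
    rewrite HPhi.
    have hk := key_ineq _ HR.
    have h1 : 3 * (fib R.+3 * p) <= 2 * (fib R.+3 * q).
      by rewrite mulnCA [in X in _ <= X]mulnCA leq_mul2l Hc orbT.
    have h2 : 13 * fib R.+1 * q <= 22 * fib R * q by rewrite leq_mul2r hk orbT.
    move: h1 h2; rewrite /Phi /= !fibSS.
    nia.
  rewrite -mulnA mulnC -mulnA.
  rewrite mulnA.
  apply: (leq_trans (_ : _ <= 9 ^ e * Phi R (p + q, p + q + (p + q + q)) * 10)).
    by rewrite leq_mul2r H orbT.
  rewrite -mulnA [_ * 10]mulnC [9 * _]mulnC -mulnA leq_mul2l K orbT //.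
-
  have Hc' : 3 * (p + q) <= 2 * (p + q + q) by lia.
  move: (IH _ _ Hc').
  change (2 + size (word bs)) with (size (word bs)).+2.
  have -> : Phi (size (word bs)).+2 (p, q) = Phi (size (word bs)) (p + q, p + q + q).
    by rewrite /Phi /= !fibSS; nia.
  by [].
Qed.

Lemma Mpres k R p q :
  Phi R (foldl step (p, q) (word (nseq k false))) = Phi (R + k.*2) (p, q).
Proof.
elim: k R p q => [|k IH] R p q; first by rewrite addn0.
rewrite /= -/(word (nseq k false)) IH doubleS !addnS /Phi /= !fibSS; nia.
Qed.

Lemma size_wordM k : size (word (nseq k false)) = k.*2.
Proof. by rewrite size_word size_nseq; elim: k => [|k IH] //=; rewrite -addnn; lia. Qed.

Definition ibits (k : nat) : seq bool :=
  [:: true; false; false; false] ++ word (nseq k false) ++ [:: true; false; false].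

Lemma s_ibits k : s (bin_val (ibits k)) = fib (k.*2 + 3) + 4 * fib (k.*2 + 4).
Proof.
rewrite /s -[stern _]/((stern (bin_val (ibits k)), stern (bin_val (ibits k)).+1).2).
rewrite -vec_correct /ibits foldl_cat foldl_cat.
have -> : foldl step (0, 1) [:: true; false; false; false] = (1, 4) by [].
case E : (foldl step (1, 4) (word (nseq k false))) => [x y].
have := Mpres k 3 1 4; rewrite E /Phi /= => H.
have h3 : fib 3 = 2 by [].
have h4 : fib 4 = 3 by [].
rewrite h3 h4 (addnC 3) -addnS in H.
lia.
Qed.

Lemma ibits_lt k : bin_val (ibits k) < 9 * 2 ^ (k.*2 + 3).
Proof.
rewrite /ibits bin_val_cat.
have := bin_val_lt (word (nseq k false) ++ [:: true; false; false]).
rewrite size_cat size_wordM /=.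
have -> : bin_val [:: true; false; false; false] = 8 by [].
rewrite addnC; lia.
Qed.

Lemma x_ge b b' bs : 9 * 2 ^ (size (word [:: b, b' & bs]) - 4) <= bin_val (word [:: b, b' & bs]).
Proof.
rewrite !word_cons catA bin_val_cat size_cat.
set r := word bs.
apply: leq_trans (leq_addr _ _).
have Hs c : 4 <= c -> 2 ^ (c + size r - 4) = 2 ^ (c - 4) * 2 ^ (size r).
  by move=> hc; rewrite -expnD; congr (_ ^ _); lia.
rewrite Hs; last by case: b; case: b'.
rewrite mulnA leq_mul2r; apply/orP; right.
by case: b; case: b'.
Qed.

Theorem mainTheorem14 (n : nat) (x : seq bool) :
  3 <= n -> inB x -> size x = 2 * n + 9 -> 5 <= delta x ->
  ~ record_setter (bin_val x).
Proof.
move=> Hn Hx Hsz Hd Hrec.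
case: (inB_word _ Hx) => b [bs Ex].
case: bs Ex => [|b' bs] Ex.
  by move: Hsz; rewrite Ex size_word /=; case: (b) => /=; lia.
set k := n.+1.
have Hlt : bin_val (ibits k) < bin_val x.
  apply: (leq_trans (ibits_lt k)).
  have := x_ge b b' bs; rewrite -Ex Hsz.
  have -> : 2 * n + 9 - 4 = k.*2 + 3 by rewrite /k -addnn; lia.
  by [].
have := Hrec _ Hlt.
rewrite s_ibits.
have HQ : s (bin_val x) = (foldl step (0, 1) x).2 by rewrite vec_correct.
rewrite HQ.
have Hm := main_bound [:: b, b' & bs] 0 1 (isT : 3 * 0 <= 2 * 1).
have Phi0 : forall T, Phi T (0, 1) = fib T.+1 by move=> T; rewrite /Phi /= muln0 add0n muln1.
rewrite -Ex Phi0 in Hm.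
move: Hd; rewrite Ex delta_word -Ex => Hd.
move: Hm Hd; set c := count id _ => Hm Hd.
set Q := (foldl step (0, 1) x).2 in Hm *.
have H4 : 10 ^ 4 * Q <= 9 ^ 4 * fib (size x).+1.
  have E4 : c - 1 = 4 + (c - 5) by lia.
  rewrite E4 !expnD in Hm; move: Hm; set e := c - 5 => Hm.
  have he : 9 ^ e <= 10 ^ e by case: (e) => // e'; rewrite leq_exp2r.
  have hp : 0 < 10 ^ e by rewrite expn_gt0.
  rewrite -(leq_pmul2r hp).
  move: Hm he; generalize (10 ^ 4) (9 ^ 4) (10 ^ e) (9 ^ e) => A B C D Hm he.
  rewrite mulnAC; apply: (leq_trans Hm).
  rewrite [B * _ * C]mulnAC.
  exact: leq_mul (leq_mul (leqnn B) he) (leqnn _).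
have h104 : 10 ^ 4 = 10000 by [].
have h94 : 9 ^ 4 = 6561 by [].
rewrite Hsz h104 h94 in H4.
have e8 : (2 * n + 9).+1 = (k.*2 + 1).+4.+3 by rewrite /k -addnn; lia.
rewrite e8 in H4.
have -> : k.*2 + 3 = (k.*2 + 1).+2 by lia.
have -> : k.*2 + 4 = (k.*2 + 1).+3 by lia.
move: H4; set m := k.*2 + 1.
have hm := fib_mono m.
rewrite !fibSS.
lia.
Qed.
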